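(* As $n\to\infty$, $$\sup_{1+\frac{(\log n)^2}{n}<w<2}\left|\frac{2\sqrt{w}\,(w-1)}{n}F_n(w)-1\right|\to0,$$ i.e. $F_n(w)=\frac{n}{2\sqrt w(w-1)}(1+o(1))$ uniformly for $1+\frac{(\log n)^2}{n}<w<2$.
   Context: For $w>0$ and integer $n\ge1$ let $a_n(w)=\sum_{j=0}^n w^j$, $b_n(w)=\sum_{j=1}^n jw^j$, $c_n(w)=\sum_{j=0}^n j^2w^j$, and $$F_n(w)=\frac{1}{2\sqrt{w}}\sqrt{\frac{c_n(w)}{a_n(w)}}\sqrt{\frac{a_n(w)c_n(w)-b_n(w)^2}{w\,a_n(w)^2}}.$$ $\log$ is the natural logarithm. *)

(* Defs.v *)
From Stdlib Require Import Reals Lra.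
Open Scope R_scope.

Definition a_n (n : nat) (w : R) : R := sum_f_R0 (fun j => w ^ j) n.
(* b_n(w) = sum_{j=1}^n j w^j  (the j = 0 term is 0) *)
Definition b_n (n : nat) (w : R) : R := sum_f_R0 (fun j => INR j * w ^ j) n.
Definition c_n (n : nat) (w : R) : R := sum_f_R0 (fun j => INR j ^ 2 * w ^ j) n.

Definition F_n (n : nat) (w : R) : R :=
  / (2 * sqrt w) * sqrt (c_n n w / a_n n w)
  * sqrt ((a_n n w * c_n n w - b_n n w ^ 2) / (w * a_n n w ^ 2)).

(* Main.v *)
Require Import Defs.
From Stdlib Require Import Reals Lra Psatz.
Open Scope R_scope.
Lemma a_closed n w : (w-1) * a_n n w = w ^ (S n) - 1.
Proof.
  induction n as [|n IH]; unfold a_n in *.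
  - simpl; ring.
  - rewrite tech5, Rmult_plus_distr_l, IH. cbn [pow]. ring.
Qed.

Lemma b_closed n w : (w-1)^2 * b_n n w =
  w ^ (S n) * (INR n * (w-1) - 1) + w.
Proof.
  induction n as [|n IH]; unfold b_n in *.
  - simpl; ring.
  - rewrite tech5, Rmult_plus_distr_l, IH. rewrite S_INR. cbn [pow]. ring.
Qed.

Lemma c_closed n w : (w-1)^3 * c_n n w =
  w ^ (S n) * (INR n ^ 2 * (w-1)^2 - (2 * INR n - 1) * (w - 1) + 2) - w * (1 + w).
Proof.
  induction n as [|n IH]; unfold c_n in *.
  - simpl; ring.
  - rewrite tech5, Rmult_plus_distr_l, IH. rewrite S_INR. cbn [pow]. ring.
Qed.
Lemma Rabs_le_b a b : Rabs a <= b -> -b <= a <= b.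
Proof. unfold Rabs; destruct (Rcase_abs a); lra. Qed.

Lemma sqrt_close Q : 0 <= Q -> Rabs (sqrt Q - 1) <= Rabs (Q - 1).
Proof.
  intro HQ. pose proof (sqrt_pos Q) as Hs. pose proof (sqrt_sqrt Q HQ) as Hss.
  set (s := sqrt Q) in *. rewrite <- Hss.
  unfold Rabs; destruct (Rcase_abs (s-1)); destruct (Rcase_abs (s*s-1)); nra.
Qed.

Lemma Q_close x y z eta : 0 <= eta <= /10 -> Rabs (x-1) <= eta -> Rabs (y-1) <= eta ->
  1 - eta <= z <= 1 -> Rabs (x*y/z^3 - 1) <= 10*eta.
Proof.
  intros He Hx Hy Hz.
  apply Rabs_le_b in Hx; apply Rabs_le_b in Hy.
  assert (Hz3: 0 < z^3) by (apply pow_lt; lra).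
  assert (Hxy1 : (1-eta)^2 <= x*y) by nra.
  assert (Hxy2 : x*y <= (1+eta)^2) by nra.
  assert (Hz3b : z^3 <= 1) by (pose proof (pow_incr z 1 3); simpl in *; nra).
  assert (Hz3c : (1-eta)^3 <= z^3) by (apply pow_incr; lra).
  apply Rabs_le; split.
  - apply Rle_trans with (x*y - 1).
    + nra.
    + apply Rplus_le_compat_r. unfold Rdiv.
      rewrite <- (Rmult_1_r (x*y)) at 1. apply Rmult_le_compat_l. nra.
      rewrite <- Rinv_1. apply Rinv_le_contravar; lra.
  - assert (x*y/z^3 <= 1 + 10*eta); [|lra].
    apply Rle_trans with ((1+eta)^2 / z^3).
    + unfold Rdiv; apply Rmult_le_compat_r; [left; apply Rinv_0_lt_compat; lra| lra].
    + apply Rmult_le_reg_r with (z^3); auto.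
      unfold Rdiv; rewrite Rmult_assoc, Rinv_l, Rmult_1_r by lra.
      apply Rle_trans with ((1+10*eta)*(1-eta)^3); [nra|].
      apply Rmult_le_compat_l; lra.
Qed.
Lemma Rdiv_le_0_compat x y : 0 <= x -> 0 < y -> 0 <= x / y.
Proof. intros; unfold Rdiv; apply Rmult_le_pos; [auto|left; apply Rinv_0_lt_compat; auto]. Qed.

Lemma core nn d w W a b c eta : w = 1 + d ->
  1 <= nn -> 0 < d < 1 -> 0 < eta <= /10 -> nn^3 <= W ->
  3/eta <= nn*d -> 10/eta <= nn ->
  d * a = W - 1 ->
  d^2 * b = W * (nn * d - 1) + w ->
  d^3 * c = W * (nn^2 * d^2 - (2*nn - 1) * d + 2) - w * (1 + w) ->
  Rabs (2 * sqrt w * d / nn *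
     (/ (2 * sqrt w) * sqrt (c / a) * sqrt ((a * c - b^2) / (w * a^2))) - 1)
  <= 10 * eta.
Proof.
  intros Hwd Hn Hd He HW Hnd Hn2 Ha Hb Hc.
  subst w.
  assert (Hnn3 : nn <= nn^3) by nra.
  assert (HW1 : 1 < W) by (assert (10 < nn); [ apply Rlt_le_trans with (10/eta); [ apply Rmult_lt_reg_r with eta; [lra|]; unfold Rdiv; rewrite Rmult_assoc, Rinv_l by lra; nra |lra] | nra]).
  assert (Hn10 : 10 < nn).
  { apply Rlt_le_trans with (10/eta); [|lra]. apply Rmult_lt_reg_r with eta; [lra|]. unfold Rdiv; rewrite Rmult_assoc, Rinv_l by lra; nra. }
  set (t := / (nn * d)).
  set (u := / W).
  assert (Ht : 0 < t <= eta/3).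
  { unfold t; split. apply Rinv_0_lt_compat; nra.
    apply Rmult_le_reg_r with (nn*d); [nra|]. rewrite Rinv_l by nra.
    apply Rmult_le_reg_l with (3/eta). apply Rdiv_lt_0_compat; lra.
    replace (3 / eta * (eta / 3 * (nn * d))) with (nn*d) by (field; lra). lra. }
  assert (Hu : 0 < u <= / nn^3).
  { unfold u; split. apply Rinv_0_lt_compat; lra. apply Rinv_le_contravar; nra. }
  assert (Hu2 : u * nn^2 <= /nn).
  { apply Rle_trans with (/nn^3 * nn^2). apply Rmult_le_compat_r; nra.
    right; field; lra. }
  assert (Hinv : /nn <= eta / 10).
  { apply Rmult_le_reg_r with nn; [lra|]. rewrite Rinv_l by lra.
    apply Rmult_le_reg_l with (10/eta). apply Rdiv_lt_0_compat; lra.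
    replace (10 / eta * (eta / 10 * nn)) with nn by (field; lra). lra. }
  assert (Hinvp : 0 < /nn) by (apply Rinv_0_lt_compat; lra).
  set (C := W * (nn^2 * d^2 - (2*nn - 1) * d + 2) - (1+d) * (1 + (1+d))) in *.
  set (x := C / (W * nn^2 * d^2)).
  set (q := (1+d)*(1+(1+d))/W).
  assert (Hq : 0 <= q <= 6).
  { unfold q; split. apply Rdiv_le_0_compat; nra.
    apply Rmult_le_reg_r with W; [lra|]. unfold Rdiv; rewrite Rmult_assoc, Rinv_l by lra. nra. }
  assert (Hx1 : x - 1 = - t * (2 - /nn) + 2 * t^2 - q * t^2).
  { unfold x, t, q, C; field; repeat split; lra. }
  assert (Hx : Rabs (x - 1) <= eta).
  { rewrite Hx1. apply Rabs_le. split; nra. }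
  set (V := (1+d) * W^2 - W * ((nn+1)^2 * d^2 + 2*d + 2) + (1+d)).
  set (y := V / ((1+d) * W^2)).
  set (g := ((nn+1)^2 * d^2 + 2*d + 2) / (1+d)).
  assert (Hg : 0 <= g <= 9 * nn^2).
  { unfold g; split. apply Rdiv_le_0_compat; nra.
    apply Rmult_le_reg_r with (1+d); [lra|]. unfold Rdiv; rewrite Rmult_assoc, Rinv_l by lra. assert (d^2 <= 1) by nra. assert ((nn+1)^2 <= 4*nn^2) by nra. assert ((nn+1)^2*d^2 <= (nn+1)^2) by nra. nra. }
  assert (Hy1 : y - 1 = - u * g + u^2).
  { unfold y, u, g, V; field; repeat split; lra. }
  assert (Hy : Rabs (y - 1) <= eta).
  { rewrite Hy1. apply Rabs_le. assert (u <= /nn) by nra. split; nra. }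
  set (z := (W - 1) / W).
  assert (Hz1 : z = 1 - u) by (unfold z, u; field; lra).
  assert (Hz : 1 - eta <= z <= 1) by nra.
  assert (Hxp : 0 < x) by (apply Rabs_le_b in Hx; lra).
  assert (Hyp : 0 < y) by (apply Rabs_le_b in Hy; lra).
  assert (Ea : a = (W-1)/d) by (apply Rmult_eq_reg_l with d; [rewrite Ha; field|]; lra).
  assert (Eb : b = (W * (nn * d - 1) + (1+d))/d^2) by (apply Rmult_eq_reg_l with (d^2); [rewrite Hb; field; lra | apply pow_nonzero; lra]).
  assert (Ec : c = C/d^3) by (apply Rmult_eq_reg_l with (d^3); [rewrite Hc; field; lra | apply pow_nonzero; lra]).
  assert (EX : c / a = x * (W * nn^2 / (W - 1))).
  { rewrite Ea, Ec; unfold x; field; repeat split; lra. }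
  assert (EY : (a * c - b^2) / ((1+d) * a^2) = y * (W^2 / (d^2 * (W-1)^2))).
  { rewrite Ea, Eb, Ec; unfold y, V, C; field; repeat split; lra. }
  assert (HX0 : 0 <= c / a) by (rewrite EX; apply Rmult_le_pos; [lra|]; apply Rdiv_le_0_compat; nra).
  assert (HY0 : 0 <= (a * c - b^2) / ((1+d) * a^2)) by (rewrite EY; apply Rmult_le_pos; [lra|]; apply Rdiv_le_0_compat; nra).
  assert (Hs : 0 < sqrt (1+d)) by (apply sqrt_lt_R0; lra).
  assert (E1 : 2 * sqrt (1+d) * d / nn *
     (/ (2 * sqrt (1+d)) * sqrt (c / a) * sqrt ((a * c - b^2) / ((1+d) * a^2)))
     = sqrt ((d/nn)^2 * (c/a) * ((a * c - b^2) / ((1+d) * a^2)))).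
  { rewrite !sqrt_mult_alt.
    - rewrite sqrt_pow2. field; split; lra. apply Rdiv_le_0_compat; lra.
    - apply pow2_ge_0.
    - apply Rmult_le_pos; [apply pow2_ge_0|auto]. }
  rewrite E1.
  eapply Rle_trans. apply sqrt_close.
  { apply Rmult_le_pos; [apply Rmult_le_pos; [apply pow2_ge_0|auto]|auto]. }
  replace ((d / nn) ^ 2 * (c / a) * ((a * c - b ^ 2) / ((1 + d) * a ^ 2))) with (x*y/z^3).
  apply Q_close; auto; lra.
  rewrite EX, EY. unfold z. field. repeat split; lra.
Qed.

Theorem lemma3p7 :
  forall eps : R, 0 < eps ->
  exists N : nat, forall n : nat, (N <= n)%nat ->
  forall w : R, 1 + (ln (INR n)) ^ 2 / INR n < w -> w < 2 ->
  Rabs (2 * sqrt w * (w - 1) / INR n * F_n n w - 1) <= eps.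
Proof.
  intros eps Heps.
  set (eta := Rmin eps 1 / 10).
  assert (He : 0 < eta <= /10) by (unfold eta; pose proof (Rmin_l eps 1); pose proof (Rmin_r eps 1);
     pose proof (Rmin_glb_lt eps 1 0 Heps ltac:(lra)); lra).
  assert (He2 : 10 * eta <= eps) by (unfold eta; pose proof (Rmin_l eps 1); lra).
  set (M := 6 + 3/eta + 10/eta).
  assert (HM3 : 0 < 3/eta) by (apply Rdiv_lt_0_compat; lra).
  assert (HM10 : 0 < 10/eta) by (apply Rdiv_lt_0_compat; lra).
  assert (HMp : 6 + 3/eta + 10/eta <= M) by (unfold M; lra).
  destruct (INR_unbounded (exp M)) as [N0 HN0].
  exists N0. intros n Hn w Hw1 Hw2.
  set (nn := INR n) in *.
  assert (Hnn : exp M < nn) by (pose proof (le_INR _ _ Hn); unfold nn; lra).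
  assert (HeM := exp_ineq1_le M).
  assert (Hnpos : 1 < nn) by lra.
  assert (Hln : M < ln nn) by (rewrite <- (ln_exp M); apply ln_increasing; [apply exp_pos|auto]).
  set (L := ln nn) in *.
  set (d := w - 1).
  assert (Hd0 : L^2 / nn < d) by (unfold d; lra).
  assert (HL2 : 0 < L^2 / nn) by (apply Rdiv_lt_0_compat; [nra|lra]).
  assert (Hnd : L^2 < nn * d).
  { apply Rmult_lt_reg_r with (/nn). apply Rinv_0_lt_compat; lra.
    replace (nn * d * /nn) with d by (field; lra). exact Hd0. }
  assert (Hw0 : 0 < w) by (unfold d in *; lra).
  assert (Hlnw : d / 2 <= ln w).
  { pose proof (exp_ineq1_le (ln (/w))) as H1. rewrite exp_ln in H1 by (apply Rinv_0_lt_compat; lra).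
    rewrite ln_Rinv in H1 by lra.
    assert (/w * w = 1) by (field; lra). unfold d. nra. }
  set (W := w ^ S n).
  assert (HWpos : 0 < W) by (apply pow_lt; lra).
  assert (HW : nn^3 <= W).
  { left. apply ln_lt_inv. apply pow_lt; lra. auto.
    unfold W; rewrite !ln_pow by lra. replace (INR 3) with 3 by (simpl; ring). rewrite (S_INR n). fold nn. fold L.
    assert (0 < d) by lra. assert (6 < L) by lra.
    assert (nn * (d/2) <= (nn+1) * ln w).
    { apply Rle_trans with (nn * ln w). apply Rmult_le_compat_l; lra.
      apply Rmult_le_compat_r; lra. }
    assert (3 * L <= L^2/2) by (assert (0 <= L*(L-6)) by (apply Rmult_le_pos; lra); replace (L^2) with (L*(L-6) + 6*L) by ring; lra). lra. }
  eapply Rle_trans; [|exact He2].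
  unfold F_n. fold d.
  apply (core nn d w W (a_n n w) (b_n n w) (c_n n w) eta); auto.
  - unfold d; ring.
  - lra.
  - unfold d in *; lra.
  - apply Rle_trans with M; [lra|]. apply Rle_trans with (L^2); [|lra]. nra.
  - lra.
  - unfold d, W, nn; rewrite a_closed; ring.
  - unfold d, W, nn; rewrite b_closed; ring.
  - unfold d, W, nn; rewrite c_closed; ring.
Qed.
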